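(* Let $\mathbb{K}=(G_{\mathbb{K}},M_{\mathbb{K}},I_{\mathbb{K}})$ and $\mathbb{S}=(G_{\mathbb{S}},M_{\mathbb{S}},I_{\mathbb{S}})$ be formal contexts and $\sigma\colon G_{\mathbb{K}}\to G_{\mathbb{S}}$ a map. Then there exist a formal context $\mathbb{T}=(G_{\mathbb{T}},M_{\mathbb{T}},I_{\mathbb{T}})$ and a map $\psi\colon G_{\mathbb{K}}\to G_{\mathbb{T}}$ such that $\psi$ is a $\mathbb{T}$-measure of $\mathbb{K}$ and $\{\psi^{-1}(A)\mid A\in \mathrm{Ext}(\mathbb{T})\}=\{\sigma^{-1}(A)\mid A\in\mathrm{Ext}(\mathbb{S})\}\cap \mathrm{Ext}(\mathbb{K})$.
   Context: A formal context is a triple $(G,M,I)$ with $G$ a non-empty finite set (objects), $M$ a finite set (attributes) and $I\subseteq G\times M$. For $A\subseteq G$ let $A'=\{m\in M\mid \forall a\in A: (a,m)\in I\}$ and for $B\subseteq M$ let $B'=\{g\in G\mid \forall b\in B:(g,b)\in I\}$. An extent of $(G,M,I)$ is a set $A\subseteq G$ with $A''=A$; $\mathrm{Ext}(G,M,I)$ denotes the set of all extents. For a map $\sigma$, $\sigma^{-1}(A)$ denotes the preimage of $A$. For formal contexts $\mathbb{K}=(G,M,I)$ and $\mathbb{T}=(G_{\mathbb{T}},M_{\mathbb{T}},I_{\mathbb{T}})$, a map $\psi\colon G\to G_{\mathbb{T}}$ is a $\mathbb{T}$-measure of $\mathbb{K}$ iff for every $A\in\mathrm{Ext}(\mathbb{T})$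 the preimage $\psi^{-1}(A)$ is in $\mathrm{Ext}(\mathbb{K})$. *)

(* Defs.v *)
From mathcomp Require Import all_boot.
Set Implicit Arguments. Unset Strict Implicit. Unset Printing Implicit Defensive.

(* A formal context (G, M, I): G, M finite types, I : G -> M -> bool.
   Non-emptiness of G is stated as a separate hypothesis where needed. *)

Definition intent {G M : finType} (I : G -> M -> bool) (A : {set G}) : {set M} :=
  [set m | [forall a in A, I a m]].

Definition extent_of {G M : finType} (I : G -> M -> bool) (B : {set M}) : {set G} :=
  [set g | [forall b in B, I g b]].

Definition is_extent {G M : finType} (I : G -> M -> bool) (A : {set G}) : bool :=
  extent_of I (intent I A) == A.

Definition Ext {G M : finType} (I : G -> M -> bool) : {set {set G}} :=
  [set A : {set G} | is_extent I A].

Definition is_measure {GK MK GT MT : finType}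
  (IK : GK -> MK -> bool) (IT : GT -> MT -> bool) (psi : GK -> GT) : Prop :=
  forall A : {set GT}, A \in Ext IT -> psi @^-1: A \in Ext IK.

(* Main.v *)
Require Import Defs.
From mathcomp Require Import all_boot.

Section Gen.
Variables (G M : finType) (I : G -> M -> bool).

Lemma ext_ext (A : {set G}) : A \subset extent_of I (intent I A).
Proof.
apply/subsetP => a aA; rewrite inE; apply/forallP => m; apply/implyP.
by rewrite inE => /forallP /(_ a); rewrite aA.
Qed.

Lemma int_ext (B : {set M}) : B \subset intent I (extent_of I B).
Proof.
apply/subsetP => m mB; rewrite inE; apply/forallP => a; apply/implyP.
by rewrite inE => /forallP /(_ m); rewrite mB.
Qed.

Lemma intent_anti (A A' : {set G}) : A \subset A' -> intent I A' \subset intent I A.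
Proof.
move=> /subsetP sA; apply/subsetP => m; rewrite !inE => /forallP H.
apply/forallP => a; apply/implyP => aA; move: (H a); rewrite sA //.
Qed.

Lemma extent_anti (B B' : {set M}) : B \subset B' -> extent_of I B' \subset extent_of I B.
Proof.
move=> /subsetP sB; apply/subsetP => g; rewrite !inE => /forallP H.
apply/forallP => m; apply/implyP => mB; move: (H m); rewrite sB //.
Qed.

Lemma is_extentP (A : {set G}) : is_extent I A = (extent_of I (intent I A) \subset A).
Proof. by rewrite /is_extent eqEsubset ext_ext andbT. Qed.

Lemma extent_is (B : {set M}) : is_extent I (extent_of I B).
Proof. by rewrite is_extentP; apply: extent_anti; apply: int_ext. Qed.

Lemma bigcap_ext (F : {set {set G}}) :
  {subset F <= Ext I} -> \bigcap_(B in F) B \in Ext I.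
Proof.
move=> HF; rewrite inE is_extentP; apply/subsetP => g Hg.
apply/bigcapP => B BF.
have: B \in Ext I by apply: HF.
rewrite inE /is_extent => /eqP <-.
move: g Hg; apply/subsetP; apply: extent_anti; apply: intent_anti.
exact: bigcap_inf.
Qed.
End Gen.

Lemma preim_char (GK GS MS : finType) (IS : GS -> MS -> bool) (sigma : GK -> GS) (X : {set GK}) :
  (X \in [set sigma @^-1: A | A : {set GS} in Ext IS]) =
  is_extent (fun g m => IS (sigma g) m) X.
Proof.
have E B : sigma @^-1: extent_of IS B = extent_of (fun g m => IS (sigma g) m) B.
  by apply/setP => g; rewrite !inE.
apply/imsetP/idP.
  move=> [A]; rewrite inE /is_extent => /eqP <- ->.
  by rewrite E; apply: extent_is.
move=> /eqP HX; exists (extent_of IS (intent (fun g m => IS (sigma g) m) X)).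
  by rewrite inE; apply: extent_is.
by rewrite E HX.
Qed.

Theorem corollary1 (GK MK GS MS : finType)
  (IK : GK -> MK -> bool) (IS : GS -> MS -> bool) (sigma : GK -> GS) :
  0 < #|GK| -> 0 < #|GS| ->
  exists (GT MT : finType) (IT : GT -> MT -> bool) (psi : GK -> GT),
    [/\ 0 < #|GT|, is_measure IK IT psi &
        [set psi @^-1: A | A : {set GT} in Ext IT] =
        [set sigma @^-1: A | A : {set GS} in Ext IS] :&: Ext IK].
Proof.
move=> HK _.
set E := [set sigma @^-1: A | A : {set GS} in Ext IS] :&: Ext IK.
pose IS' := fun g m => IS (sigma g) m.
have Ech (X : {set GK}) : (X \in E) = (X \in Ext IS') && (X \in Ext IK).
  rewrite /E in_setI; congr (_ && _); rewrite [RHS]inE; exact: preim_char.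
have Eclos (F : {set {set GK}}) : {subset F <= E} -> \bigcap_(B in F) B \in E.
  move=> HF; rewrite Ech; apply/andP; split; apply: bigcap_ext => B BF;
  by move: (HF B BF); rewrite Ech => /andP [].
pose IT := fun (g : GK) (B : {set GK}) => (B \in E) ==> (g \in B).
have ExtT : Ext IT = E.
  apply/setP => X; rewrite inE; apply/idP/idP.
  - move=> /eqP HX.
    pose F := [set B in E | X \subset B].
    suff <- : \bigcap_(B in F) B = X by apply: Eclos => B; rewrite inE => /andP [].
    apply/eqP; rewrite eqEsubset; apply/andP; split.
    + apply/subsetP => g Hg; rewrite -HX inE; apply/forallP => B; apply/implyP.
      rewrite inE => /forallP HB; apply/implyP => BE.
      move/bigcapP: Hg; apply; rewrite inE BE /=.
      by apply/subsetP => a aX; move: (HB a); rewrite aX /IT BE.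
    + by apply/bigcapsP => B; rewrite inE => /andP [].
  - move=> XE; rewrite is_extentP; apply/subsetP => g; rewrite inE.
    move=> /forallP /(_ X) /implyP H.
    have HX : X \in intent IT X.
      by rewrite inE; apply/forallP => a; apply/implyP => aX; rewrite /IT XE aX.
    by move: (H HX); rewrite /IT XE.
have idpre (A : {set GK}) : id @^-1: A = A by apply/setP => x; rewrite inE.
exists GK, {set GK}, IT, id; split => //.
- move=> A; rewrite idpre ExtT Ech => /andP [].
  by [].
- apply/setP => X; apply/imsetP/idP.
    by move=> [A]; rewrite ExtT idpre => ? ->.
  by move=> XE; exists X; rewrite ?ExtT ?idpre.
Qed.
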